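(* Let $(X,d)$ be a reflexive Busemann convex geodesic metric space and let $A,B\subseteq X$ be nonempty, closed and convex, with $B$ bounded. Define $$A_0=\{x\in A : d(x,y')=\operatorname{dist}(A,B)\text{ for some } y'\in B\},\qquad B_0=\{y\in B : d(x',y)=\operatorname{dist}(A,B)\text{ for some } x'\in A\}.$$ Then $A_0$ and $B_0$ are closed, convex, bounded and nonempty.
   Context: $\operatorname{dist}(A,B)=\inf\{d(x,y):x\in A,y\in B\}$. A geodesic space is one in which any two points $x,y$ are joined by a geodesic segment (an isometric image of $[0,d(x,y)]$); a subset is convex if it contains every geodesic segment joining any two of its points. A geodesic space is Busemann convex if for any geodesics $c_1:[0,l_1]\to X$, $c_2:[0,l_2]\to X$ one has $d(c_1(tl_1),c_2(tl_2))\le (1-t)d(c_1(0),c_2(0))+t\,d(c_1(l_1),c_2(l_2))$ for all $t\in[0,1]$. A geodesic space $X$ is reflexive if every decreasing chain $\{C_\alpha\}_{\alpha\in I}$ of nonempty closed convex bounded subsets of $X$ has nonempty intersection. *)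

(* Defs.v *)
From Stdlib Require Import Reals.
From Coquelicot Require Import Coquelicot.
Open Scope R_scope.

Section MetricDefs.
Context {X : Type} (d : X -> X -> R).

Definition metric_axioms : Prop :=
  (forall x y, 0 <= d x y) /\
  (forall x y, d x y = 0 <-> x = y) /\
  (forall x y, d x y = d y x) /\
  (forall x y z, d x z <= d x y + d y z).

(* c : [0,l] -> X is a geodesic (isometric embedding of [0,l]);
   c is given as a total function on R, only its values on [0,l] matter *)
Definition geodesic (c : R -> X) (l : R) : Prop :=
  0 <= l /\ forall s t, 0 <= s <= l -> 0 <= t <= l -> d (c s) (c t) = Rabs (s - t).

Definition geodesic_joining (c : R -> X) (x y : X) : Prop :=
  geodesic c (d x y) /\ c 0 = x /\ c (d x y) = y.

Definition geodesic_space : Prop :=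
  forall x y, exists c, geodesic_joining c x y.

Definition mconvex_set (A : X -> Prop) : Prop :=
  forall x y c, A x -> A y -> geodesic_joining c x y ->
    forall t, 0 <= t <= d x y -> A (c t).

Definition busemann_convex : Prop :=
  forall (c1 c2 : R -> X) (l1 l2 : R), geodesic c1 l1 -> geodesic c2 l2 ->
    forall t, 0 <= t <= 1 ->
      d (c1 (t * l1)) (c2 (t * l2)) <= (1 - t) * d (c1 0) (c2 0) + t * d (c1 l1) (c2 l2).

Definition mclosed_set (A : X -> Prop) : Prop :=
  forall x, ~ A x -> exists e, 0 < e /\ forall y, d x y < e -> ~ A y.

Definition mbounded_set (A : X -> Prop) : Prop :=
  exists x0 r, forall x, A x -> d x0 x <= r.

Definition mnonempty_set (A : X -> Prop) : Prop := exists x, A x.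

Definition reflexive_space : Prop :=
  forall F : (X -> Prop) -> Prop,
    (exists C, F C) ->
    (forall C1 C2, F C1 -> F C2 ->
       (forall x, C1 x -> C2 x) \/ (forall x, C2 x -> C1 x)) ->
    (forall C, F C -> mnonempty_set C /\ mclosed_set C /\ mconvex_set C /\ mbounded_set C) ->
    exists x, forall C, F C -> C x.

Definition distAB (A B : X -> Prop) : R :=
  real (Glb_Rbar (fun r => exists x y, A x /\ B y /\ r = d x y)).

Definition proxA0 (A B : X -> Prop) : X -> Prop :=
  fun x => A x /\ exists y', B y' /\ d x y' = distAB A B.

Definition proxB0 (A B : X -> Prop) : X -> Prop :=
  fun y => B y /\ exists x', A x' /\ d x' y = distAB A B.

End MetricDefs.

(* Main.v *)
Require Import Defs.
From Stdlib Require Import Reals Lra Psatz Classical.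
From Coquelicot Require Import Coquelicot.
Open Scope R_scope.

Section Aux.
Context {X : Type} (d : X -> X -> R).
Hypothesis Hm : metric_axioms d.

Lemma dpos x y : 0 <= d x y. Proof. apply (proj1 Hm). Qed.
Lemma dself x : d x x = 0. Proof. apply (proj1 (proj2 Hm)). reflexivity. Qed.
Lemma dsym x y : d x y = d y x. Proof. apply (proj1 (proj2 (proj2 Hm))). Qed.
Lemma dtri x y z : d x z <= d x y + d y z. Proof. apply (proj2 (proj2 (proj2 Hm))). Qed.

Lemma dist_props (A B : X -> Prop) : mnonempty_set A -> mnonempty_set B ->
  (forall x y, A x -> B y -> distAB d A B <= d x y) /\
  (forall e, 0 < e -> exists x y, A x /\ B y /\ d x y < distAB d A B + e).
Proof.
  intros [a Ha] [b Hb]. unfold distAB.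
  set (E := fun r => exists x y, A x /\ B y /\ r = d x y).
  destruct (Glb_Rbar_correct E) as [Hlb Hgl].
  destruct (Glb_Rbar E) as [g| |] eqn:Hg; simpl.
  - split.
    + intros x y Hx Hy. apply (Hlb (d x y)). exists x, y; auto.
    + intros e He. apply NNPP; intro Hn.
      assert (Hl : is_lb_Rbar E (g + e)).
      { intros r [x [y [Hx [Hy ->]]]]. simpl. apply Rnot_lt_le. intro Hlt.
        apply Hn. exists x, y; auto. }
      specialize (Hgl _ Hl). simpl in Hgl. lra.
  - exfalso. specialize (Hlb (d a b)). simpl in Hlb. apply Hlb. exists a, b; auto.
  - exfalso. assert (Hl : is_lb_Rbar E 0).
    { intros r [x [y [Hx [Hy ->]]]]. simpl. apply dpos. }
    specialize (Hgl _ Hl). simpl in Hgl. exact Hgl.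
Qed.

Lemma mclosed_ext (P Q : X -> Prop) : (forall x, P x <-> Q x) -> mclosed_set d P -> mclosed_set d Q.
Proof.
  intros H HP x Hx. destruct (HP x) as [e [He H']]. { rewrite H; auto. }
  exists e; split; auto. intros y Hy. rewrite <- H. auto.
Qed.

Lemma mconvex_ext (P Q : X -> Prop) : (forall x, P x <-> Q x) -> mconvex_set d P -> mconvex_set d Q.
Proof.
  intros H HP x y c Hx Hy Hc t Ht. apply H. apply (HP x y c); auto; apply H; auto.
Qed.

Hypothesis Hbus : busemann_convex d.

Lemma bus_point c1 c2 x1 x2 y1 y2 s :
  geodesic_joining d c1 x1 x2 -> geodesic_joining d c2 y1 y2 -> 0 <= s <= d x1 x2 ->
  exists s', 0 <= s' <= d y1 y2 /\ exists t, 0 <= t <= 1 /\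
    d (c1 s) (c2 s') <= (1 - t) * d x1 y1 + t * d x2 y2.
Proof.
  intros [G1 [H10 H1l]] [G2 [H20 H2l]] Hs.
  destruct (Req_dec (d x1 x2) 0) as [Hz|Hnz].
  - exists 0. split. { split; [lra| apply dpos]. }
    exists 0. split; [lra|]. replace s with 0 by lra. rewrite H10, H20. lra.
  - set (l1 := d x1 x2) in *. set (l2 := d y1 y2) in *.
    assert (Hl1 : 0 < l1) by (pose proof (dpos x1 x2); fold l1 in H; lra).
    assert (Hl2 : 0 <= l2) by apply dpos.
    set (t := s / l1).
    assert (Ht : t * l1 = s) by (unfold t; field; lra).
    assert (Ht0 : 0 <= t) by nra.
    assert (Ht1 : t <= 1) by nra.
    exists (t * l2). split. { split; nra. }
    exists t. split; [lra|].
    pose proof (Hbus c1 c2 l1 l2 G1 G2 t (conj Ht0 Ht1)) as HB.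
    rewrite Ht, H10, H20, H1l, H2l in HB. exact HB.
Qed.

Lemma const_geo p : geodesic_joining d (fun _ => p) p p.
Proof.
  unfold geodesic_joining, geodesic. rewrite dself. split; [split; [lra|]|split; reflexivity].
  intros s t Hs Ht. replace (s - t) with 0 by lra. now rewrite Rabs_R0.
Qed.

Lemma ball_convex p r : mconvex_set d (fun x => d p x <= r).
Proof.
  intros x y c Hx Hy Hc s Hs.
  destruct (bus_point c (fun _ => p) x y p p s Hc (const_geo p) Hs) as [s' [_ [t [Ht H]]]].
  rewrite dsym. rewrite (dsym x p), (dsym y p) in H. nra.
Qed.

Hypothesis Hgeo : geodesic_space d.
Hypothesis Hrefl : reflexive_space d.

Lemma nearest (S : X -> Prop) p D :
  mclosed_set d S -> mconvex_set d S ->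
  (forall r, D < r -> exists y, S y /\ d p y <= r) -> exists y, S y /\ d p y <= D.
Proof.
  intros HSc HSv Hr.
  destruct (Hrefl (fun C => exists r, D < r /\ forall y, C y <-> (S y /\ d p y <= r)))
    as [x Hx].
  - exists (fun y => S y /\ d p y <= D + 1). exists (D + 1). split; [lra|tauto].
  - intros C1 C2 [r1 [_ H1]] [r2 [_ H2]].
    destruct (Rle_dec r1 r2).
    + left. intros x Hx. apply H2. apply H1 in Hx. split; [tauto|lra].
    + right. intros x Hx. apply H1. apply H2 in Hx. split; [tauto|lra].
  - intros C [r [Hr1 HC]]. split; [|split; [|split]].
    + destruct (Hr r Hr1) as [y Hy]. exists y. apply HC. auto.
    + apply (mclosed_ext (fun y => S y /\ d p y <= r)); [intro; rewrite HC; tauto|].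
      intros x Hx. destruct (classic (S x)) as [HS|HS].
      * assert (Hgt : r < d p x) by (apply Rnot_le_lt; tauto).
        exists (d p x - r). split; [lra|]. intros y Hy [_ Hy2].
        pose proof (dtri p y x). rewrite (dsym y x) in H. lra.
      * destruct (HSc x HS) as [e [He He']]. exists e. split; auto.
        intros y Hy [Hy1 _]. exact (He' y Hy Hy1).
    + apply (mconvex_ext (fun y => S y /\ d p y <= r)); [intro; rewrite HC; tauto|].
      intros x y c [Hx1 Hx2] [Hy1 Hy2] Hc t Ht. split.
      * exact (HSv x y c Hx1 Hy1 Hc t Ht).
      * exact (ball_convex p r x y c Hx2 Hy2 Hc t Ht).
    + exists p, r. intros x Hx. apply HC in Hx. tauto.
  - exists x. split.
    + assert (H := Hx (fun y => S y /\ d p y <= D + 1)). apply H.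
      exists (D + 1). split; [lra|tauto].
    + apply Rnot_lt_le. intro Hlt.
      assert (H := Hx (fun y => S y /\ d p y <= (D + d p x) / 2)).
      destruct H as [_ H]. { exists ((D + d p x) / 2). split; [lra|tauto]. }
      lra.
Qed.

Lemma closed_prox (P Q : X -> Prop) D :
  mclosed_set d P -> mclosed_set d Q -> mconvex_set d Q ->
  (forall x y, P x -> Q y -> D <= d x y) ->
  mclosed_set d (fun x => P x /\ exists y, Q y /\ d x y = D).
Proof.
  intros HPc HQc HQv Hlb x Hx.
  destruct (classic (P x)) as [HP|HP].
  - destruct (classic (exists e, 0 < e /\ forall y, Q y -> D + e <= d x y)) as [[e [He H]]|Hn].
    + exists e. split; auto. intros x' Hx' [_ [y' [Hy' Hd]]].
      specialize (H y' Hy'). pose proof (dtri x x' y'). lra.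
    + exfalso. apply Hx. split; auto.
      assert (Hpre : forall r, D < r -> exists y, Q y /\ d x y <= r).
      { intros r Hr. apply NNPP. intro Hn2. apply Hn. exists (r - D). split; [lra|].
        intros y Hy. apply Rlt_le. apply Rnot_le_lt. intro. apply Hn2. exists y; split; [auto|lra]. }
      destruct (nearest Q x D HQc HQv Hpre) as [y [Hy Hd]].
      exists y. split; auto. pose proof (Hlb x y HP Hy). lra.
  - destruct (HPc x HP) as [e [He H]]. exists e. split; auto.
    intros y Hy [Hy1 _]. exact (H y Hy Hy1).
Qed.

Lemma convex_prox (P Q : X -> Prop) D :
  mconvex_set d P -> mconvex_set d Q ->
  (forall x y, P x -> Q y -> D <= d x y) ->
  mconvex_set d (fun x => P x /\ exists y, Q y /\ d x y = D).
Proof.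
  intros HPv HQv Hlb x1 x2 c [Hx1 [y1 [Hy1 Hd1]]] [Hx2 [y2 [Hy2 Hd2]]] Hc s Hs.
  assert (HPs : P (c s)) by exact (HPv x1 x2 c Hx1 Hx2 Hc s Hs).
  split; auto.
  destruct (Hgeo y1 y2) as [c' Hc'].
  destruct (bus_point c c' x1 x2 y1 y2 s Hc Hc' Hs) as [s' [Hs' [t [Ht H]]]].
  exists (c' s'). assert (HQs : Q (c' s')) by exact (HQv y1 y2 c' Hy1 Hy2 Hc' s' Hs').
  split; auto. pose proof (Hlb _ _ HPs HQs). rewrite Hd1, Hd2 in H. nra.
Qed.

Lemma exists_prox (A B : X -> Prop) D :
  mclosed_set d A -> mconvex_set d A -> mclosed_set d B -> mconvex_set d B -> mbounded_set d B ->
  (forall x y, A x -> B y -> D <= d x y) ->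
  (forall e, 0 < e -> exists x y, A x /\ B y /\ d x y < D + e) ->
  exists x y, A x /\ B y /\ d x y = D.
Proof.
  intros HAc HAv HBc HBv [b0 [rb HBb]] Hlb Happ.
  destruct (Hrefl (fun C => exists r, D < r /\ forall y, C y <->
      (B y /\ forall e, 0 < e -> exists x, A x /\ d x y < r + e))) as [y0 Hy0].
  - eexists. exists (D + 1). split; [lra|]. intro y. apply iff_refl.
  - intros C1 C2 [r1 [_ H1]] [r2 [_ H2]].
    destruct (Rle_dec r1 r2).
    + left. intros y Hy. apply H2. apply H1 in Hy. destruct Hy as [Hy1 Hy2]. split; auto.
      intros e He. destruct (Hy2 e He) as [x [Hx Hd]]. exists x. split; auto. lra.
    + right. intros y Hy. apply H1. apply H2 in Hy. destruct Hy as [Hy1 Hy2]. split; auto.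
      intros e He. destruct (Hy2 e He) as [x [Hx Hd]]. exists x. split; auto. lra.
  - intros C [r [Hr HC]]. split; [|split; [|split]].
    + destruct (Happ (r - D)) as [x [y [Hx [Hy Hd]]]]; [lra|].
      exists y. apply HC. split; auto. intros e He. exists x. split; auto. lra.
    + apply (mclosed_ext (fun y => B y /\ forall e, 0 < e -> exists x, A x /\ d x y < r + e));
        [intro; rewrite HC; tauto|].
      intros y Hy. destruct (classic (B y)) as [HB|HB].
      * destruct (classic (exists e, 0 < e /\ forall x, A x -> r + e <= d x y)) as [[e [He H]]|Hn].
        -- exists (e / 2). split; [lra|]. intros y' Hyy' [_ H'].
           destruct (H' (e / 2)) as [x [Hx Hd]]; [lra|].
           specialize (H x Hx). pose proof (dtri x y' y). rewrite (dsym y' y) in H0. lra.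
        -- exfalso. apply Hy. split; auto. intros e He. apply NNPP. intro Hn2.
           apply Hn. exists e. split; auto. intros x Hx. apply Rnot_lt_le. intro.
           apply Hn2. exists x. auto.
      * destruct (HBc y HB) as [e [He H]]. exists e. split; auto.
        intros y' Hy' [Hy1 _]. exact (H y' Hy' Hy1).
    + apply (mconvex_ext (fun y => B y /\ forall e, 0 < e -> exists x, A x /\ d x y < r + e));
        [intro; rewrite HC; tauto|].
      intros y1 y2 c [Hy1 Hy1'] [Hy2 Hy2'] Hc s Hs. split.
      * exact (HBv y1 y2 c Hy1 Hy2 Hc s Hs).
      * intros e He. destruct (Hy1' (e / 2)) as [x1 [Hx1 Hd1]]; [lra|].
        destruct (Hy2' (e / 2)) as [x2 [Hx2 Hd2]]; [lra|].
        destruct (Hgeo x1 x2) as [c' Hc'].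
        destruct (bus_point c c' y1 y2 x1 x2 s Hc Hc' Hs) as [s' [Hs' [t [Ht H]]]].
        exists (c' s'). split; [exact (HAv x1 x2 c' Hx1 Hx2 Hc' s' Hs')|].
        rewrite dsym. rewrite (dsym y1 x1), (dsym y2 x2) in H. nra.
    + exists b0, rb. intros y Hy. apply HC in Hy. apply HBb. tauto.
  - assert (HB0 : B y0 /\ forall r, D < r -> forall e, 0 < e -> exists x, A x /\ d x y0 < r + e).
    { split.
      - assert (H := Hy0 (fun y => B y /\ forall e, 0 < e -> exists x, A x /\ d x y < (D+1) + e)).
        apply H. exists (D + 1). split; [lra|]. intro; apply iff_refl.
      - intros r Hr. assert (H := Hy0 (fun y => B y /\ forall e, 0 < e -> exists x, A x /\ d x y < r + e)).
        apply H. exists r. split; [lra|]. intro; apply iff_refl. }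
    destruct HB0 as [HBy0 Hy0'].
    assert (Hpre : forall r, D < r -> exists x, A x /\ d y0 x <= r).
    { intros r Hr. destruct (Hy0' ((D + r) / 2) ltac:(lra) ((r - D) / 2) ltac:(lra)) as [x [Hx Hdx]].
      exists x. split; auto. rewrite dsym. lra. }
    destruct (nearest A y0 D HAc HAv Hpre) as [x0 [Hx0 Hd]].
    exists x0, y0. split; auto. split; auto. pose proof (Hlb x0 y0 Hx0 HBy0). rewrite dsym in Hd. lra.
Qed.

End Aux.

Theorem mainTheorem1 (X : Type) (d : X -> X -> R) (A B : X -> Prop) :
  metric_axioms d -> geodesic_space d -> busemann_convex d -> reflexive_space d ->
  mnonempty_set A -> mclosed_set d A -> mconvex_set d A ->
  mnonempty_set B -> mclosed_set d B -> mconvex_set d B -> mbounded_set d B ->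
  (mclosed_set d (proxA0 d A B) /\ mconvex_set d (proxA0 d A B) /\
   mbounded_set d (proxA0 d A B) /\ mnonempty_set (proxA0 d A B)) /\
  (mclosed_set d (proxB0 d A B) /\ mconvex_set d (proxB0 d A B) /\
   mbounded_set d (proxB0 d A B) /\ mnonempty_set (proxB0 d A B)).
Proof.
  intros Hm Hgeo Hbus Hrefl HAn HAc HAv HBn HBc HBv HBb.
  destruct (dist_props d Hm A B HAn HBn) as [Hlb Happ].
  set (D := distAB d A B) in *.
  assert (HlbB : forall y x, B y -> A x -> D <= d y x).
  { intros y x Hy Hx. rewrite (dsym d Hm). auto. }
  destruct (exists_prox d Hm Hbus Hgeo Hrefl A B D HAc HAv HBc HBv HBb Hlb Happ)
    as [x0 [y0 [Hx0 [Hy0 Hd0]]]].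
  assert (EB : forall y, (B y /\ exists x, A x /\ d y x = D) <-> proxB0 d A B y).
  { intro y. unfold proxB0. fold D. split; intros [H1 [x [H2 H3]]]; split; auto;
      exists x; split; auto; rewrite (dsym d Hm); auto. }
  destruct HBb as [b0 [rb Hb]].
  split; [split; [|split; [|split]] | split; [|split; [|split]]].
  - exact (closed_prox d Hm Hbus Hrefl A B D HAc HBc HBv Hlb).
  - exact (convex_prox d Hm Hbus Hgeo A B D HAv HBv Hlb).
  - exists b0, (rb + D). intros x [Hx [y [Hy Hd]]]. fold D in Hd.
    pose proof (dtri d Hm b0 y x). rewrite (dsym d Hm y x) in H. specialize (Hb y Hy). lra.
  - exists x0. split; auto. exists y0. auto.
  - exact (mclosed_ext d _ _ EB (closed_prox d Hm Hbus Hrefl B A D HBc HAc HAv HlbB)).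
  - exact (mconvex_ext d _ _ EB (convex_prox d Hm Hbus Hgeo B A D HBv HAv HlbB)).
  - exists b0, rb. intros y [Hy _]. auto.
  - exists y0. split; auto. exists x0. auto.
Qed.
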